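(* Let $A$ be a commutative semiring and $a,b\in A$. Let $R(a,b)=\{(ax+by+z,\ bx+ay+z):x,y,z\in A\}$. Then $R(a,b)_+$ is a congruence on $A$, and $R(a,b)\subseteq\rho\subseteq R(a,b)_+\subseteq\rho_+$, where $\rho=\{(a,b)\}^{c}$.
   Context: Semirings are commutative with $0$ and $1\neq0$, $0a=0$; congruences are equivalence relations compatible with $+,\cdot$. For a relation $R$, $R_+=\{(u,v)\in A\times A:(u+c,v+c)\in R$ for some $c\in A\}$; $\{(a,b)\}^{c}$ is the congruence generated by the pair $(a,b)$. *)

(* Defs.v *)
From HB Require Import structures.
From mathcomp Require Import all_boot all_algebra.
Set Implicit Arguments. Unset Strict Implicit. Unset Printing Implicit Defensive.
Import GRing.Theory.
Local Open Scope ring_scope.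

(* Commutative semiring with 0, 1 <> 0, 0a = 0: MathComp's comNzSemiRingType. *)

Definition rel_sub (A : Type) (R S : A -> A -> Prop) : Prop :=
  forall u v, R u v -> S u v.

Definition is_congruence (A : comNzSemiRingType) (r : A -> A -> Prop) : Prop :=
  [/\ (forall x, r x x),
      (forall x y, r x y -> r y x),
      (forall x y z, r x y -> r y z -> r x z),
      (forall x y x' y', r x y -> r x' y' -> r (x + x') (y + y')) &
      (forall x y x' y', r x y -> r x' y' -> r (x * x') (y * y'))].

Definition rel_plus (A : comNzSemiRingType) (R : A -> A -> Prop) : A -> A -> Prop :=
  fun u v => exists c, R (u + c) (v + c).

Definition gen_congr (A : comNzSemiRingType) (a b : A) : A -> A -> Prop :=
  fun u v => forall r, is_congruence r -> r a b -> r u v.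

Definition Rab (A : comNzSemiRingType) (a b : A) : A -> A -> Prop :=
  fun u v => exists x y z, u = a * x + b * y + z /\ v = b * x + a * y + z.

(* Main.v *)
Require Import Defs.
From mathcomp Require Import all_boot all_algebra.
Local Open Scope ring_scope.
Import GRing.Theory.

Lemma Rp_mulr (A : comNzSemiRingType) (a b : A) u v t :
  rel_plus (Rab a b) u v -> rel_plus (Rab a b) (u * t) (v * t).
Proof.
move=> [c [x [y [z [Hu Hv]]]]].
exists (c * t); exists (x * t), (y * t), (z * t).
by rewrite -!mulrDl Hu Hv !mulrDl !mulrA.
Qed.

Lemma L3 (A : comNzSemiRingType) (p1 p2 p3 q1 q2 q3 : A) :
  (p1 + p2 + p3) + (q1 + q2 + q3) = (p1 + q1) + (p2 + q2) + (p3 + q3).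
Proof. by rewrite addrACA [p1 + p2 + _]addrACA. Qed.

Lemma Rp_trans (A : comNzSemiRingType) (a b : A) u v w :
  rel_plus (Rab a b) u v -> rel_plus (Rab a b) v w -> rel_plus (Rab a b) u w.
Proof.
move=> [c [x [y [z [Hu Hv]]]]] [d [x' [y' [z' [Hv' Hw]]]]].
exists (c + (v + d)); exists (x + x'), (y + y'), (z + z'); split.
  by rewrite addrA Hu Hv' L3 !mulrDr.
have -> : w + (c + (v + d)) = (v + c) + (w + d).
  rewrite (addrC v c) -addrA [LHS]addrCA; congr (c + _); exact: addrCA.
by rewrite Hv Hw L3 !mulrDr.
Qed.

Lemma Rp_congr (A : comNzSemiRingType) (a b : A) : is_congruence (rel_plus (Rab a b)).
Proof.
split.
- move=> u; exists 0, 0, 0, (u + 0); by rewrite !mulr0 !add0r.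
- move=> u v [c [x [y [z [Hu Hv]]]]]; exists c, y, x, z; rewrite Hu Hv; split; congr (_ + _); exact: addrC.
- exact: Rp_trans.
- move=> u v u' v' [c [x [y [z [Hu Hv]]]]] [c' [x' [y' [z' [Hu' Hv']]]]].
  exists (c + c'); exists (x + x'), (y + y'), (z + z'); split.
    by rewrite addrACA Hu Hu' L3 !mulrDr.
  by rewrite addrACA Hv Hv' L3 !mulrDr.
- move=> u v u' v' H H'. apply: (@Rp_trans _ _ _ _ (v * u')); first exact: Rp_mulr.
  rewrite (mulrC v u') (mulrC v v'); exact: Rp_mulr.
Qed.

Lemma R_sub (A : comNzSemiRingType) (a b : A) : rel_sub (Rab a b) (gen_congr a b).
Proof.
move=> u v [x [y [z [-> ->]]]] r Hc Hab; case: Hc => Hr Hs Ht Ha Hm.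
apply: (Ha); last exact: Hr.
apply: (Ha); apply: (Hm) => //; exact: Hs.
Qed.

Theorem proposition2p21 (A : comNzSemiRingType) (a b : A) :
  is_congruence (rel_plus (Rab a b)) /\
  rel_sub (Rab a b) (gen_congr a b) /\
  rel_sub (gen_congr a b) (rel_plus (Rab a b)) /\
  rel_sub (rel_plus (Rab a b)) (rel_plus (gen_congr a b)).
Proof.
split; first exact: Rp_congr.
split; first exact: R_sub.
split.
  move=> u v H; apply: H; first exact: Rp_congr.
  exists 0, 1, 0, 0; by rewrite !mulr1 !mulr0 !addr0.
move=> u v [c Hc]; exists c; exact: R_sub.
Qed.
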